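(* Let $\rho$ be a two-qubit state whose two reduced states are both maximally mixed, i.e. $\mathrm{Tr}[\rho(\sigma_i\otimes\mathbb{1})]=\mathrm{Tr}[\rho(\mathbb{1}\otimes\sigma_i)]=0$ for $i=1,2,3$, and let $T$ be its correlation matrix $T_{ij}=\mathrm{Tr}[\rho(\sigma_i\otimes\sigma_j)]$, brought by local unitary operations to the diagonal form $T=\mathrm{diag}(t_1,t_2,t_3)$. Then $$G(\rho)=\tfrac14\big[t_1^2+t_2^2+t_3^2-\max\{t_1^2,t_2^2,t_3^2\}\big],$$ and $G(\rho)=G^{\to}(\rho)=G^{\leftarrow}(\rho)$.
   Context: $\sigma_i$ are the Pauli matrices. The Hilbert–Schmidt distance is $D(M,N)=\sqrt{\mathrm{Tr}[(M-N)(M-N)^\dagger]}$. For unit vectors $\vec{k},\vec{\ell}\in\mathbb{R}^3$ let $\Pi^A_\pm=\frac12(\mathbb{1}\pm\vec{k}\cdot\vec{\sigma})$, $\Pi^B_\pm=\frac12(\mathbb{1}\pm\vec{\ell}\cdot\vec{\sigma})$. Define $\chi_{\vec{k},\vec{\ell}}=\sum_{i,j=\pm}(\Pi^A_i\otimes\Pi^B_j)\rho(\Pi^A_i\otimes\Pi^B_j)$, $\rho^{\to}_{\vec{k}}=\sum_{i=\pm}(\Pi^A_i\otimes\mathbb{1})\rho(\Pi^A_i\otimes\mathbb{1})$, $\rho^{\leftarrow}_{\vec{\ell}}=\sum_{j=\pm}(\mathbb{1}\otimes\Pi^B_j)\rho(\mathbb{1}\otimes\Pi^B_j)$. Then $G(\rho)=\min_{\vec{k},\vec{\ell}}D^2(\rho,\chi_{\vec{k},\vec{\ell}})$,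 $G^{\to}(\rho)=\min_{\vec{k}}D^2(\rho,\rho^{\to}_{\vec{k}})$, $G^{\leftarrow}(\rho)=\min_{\vec{\ell}}D^2(\rho,\rho^{\leftarrow}_{\vec{\ell}})$, minima over unit vectors. (All these quantities are invariant under local unitaries.) *)

(* Defs.v *)
From HB Require Import structures.
From mathcomp Require Import all_boot all_order all_algebra.
From mathcomp Require Import complex mxtens.
Set Implicit Arguments. Unset Strict Implicit. Unset Printing Implicit Defensive.
Import Order.TTheory GRing.Theory Num.Theory.
Local Open Scope ring_scope.

Section Qubits.
Variable R : rcfType.
Local Notation C := (R[i]).

Definition rC (x : R) : C := Complex x 0.

Definition hadj m n (M : 'M[C]_(m, n)) : 'M[C]_(n, m) := map_mx Num.conj (M^T).

(* Pauli matrices sigma_1, sigma_2, sigma_3 (indexed by 'I_3 = {0,1,2}) *)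
Definition pauli (a : 'I_3) : 'M[C]_2 :=
  \matrix_(i < 2, j < 2)
    match nat_of_ord a, nat_of_ord i, nat_of_ord j with
    | 0, 0, 1 => 1 | 0, 1, 0 => 1
    | 1, 0, 1 => - Complex 0 1 | 1, 1, 0 => Complex 0 1
    | 2, 0, 0 => 1 | 2, 1, 1 => -1
    | _, _, _ => 0
    end.

Definition id2 : 'M[C]_2 := 1%:M.

Definition unitvec (k : 'rV[R]_3) : Prop := \sum_(i < 3) k 0 i ^+ 2 = 1.

Definition kdots (k : 'rV[R]_3) : 'M[C]_2 := \sum_(i < 3) rC (k 0 i) *: pauli i.

Definition proj (k : 'rV[R]_3) (b : bool) : 'M[C]_2 :=
  (2%:R)^-1 *: (id2 + ((-1) ^+ b) *: kdots k).

Definition chi (rho : 'M[C]_(2 * 2)) (k l : 'rV[R]_3) : 'M[C]_(2 * 2) :=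
  \sum_(a : bool) \sum_(b : bool)
    ((proj k a *t proj l b) *m rho *m (proj k a *t proj l b)).

Definition rho_to (rho : 'M[C]_(2 * 2)) (k : 'rV[R]_3) : 'M[C]_(2 * 2) :=
  \sum_(a : bool) ((proj k a *t id2) *m rho *m (proj k a *t id2)).

Definition rho_from (rho : 'M[C]_(2 * 2)) (l : 'rV[R]_3) : 'M[C]_(2 * 2) :=
  \sum_(b : bool) ((id2 *t proj l b) *m rho *m (id2 *t proj l b)).

Definition HS2 n (M N : 'M[C]_n) : C := \tr ((M - N) *m hadj (M - N)).

Definition density n (rho : 'M[C]_n) : Prop :=
  [/\ hadj rho = rho,
      (forall v : 'cV[C]_n, 0 <= (hadj v *m rho *m v) 0 0)
    & \tr rho = 1].

Definition unitary2 (U : 'M[C]_2) : Prop := U *m hadj U = 1%:M.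

Definition is_min_on (T : Type) (P : T -> Prop) (f : T -> C) (v : C) : Prop :=
  (exists2 x, P x & f x = v) /\ (forall x, P x -> v <= f x).

Definition G_is (rho : 'M[C]_(2 * 2)) (v : C) : Prop :=
  is_min_on (fun kl : 'rV[R]_3 * 'rV[R]_3 => unitvec kl.1 /\ unitvec kl.2)
            (fun kl => HS2 rho (chi rho kl.1 kl.2)) v.
Definition Gto_is (rho : 'M[C]_(2 * 2)) (v : C) : Prop :=
  is_min_on unitvec (fun k => HS2 rho (rho_to rho k)) v.
Definition Gfrom_is (rho : 'M[C]_(2 * 2)) (v : C) : Prop :=
  is_min_on unitvec (fun l => HS2 rho (rho_from rho l)) v.

Definition corr (rho : 'M[C]_(2 * 2)) (i j : 'I_3) : C :=
  \tr (rho *m (pauli i *t pauli j)).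

End Qubits.

Arguments pauli {R}.
Arguments id2 {R}.

(* Main.v *)
Require Import Defs.
From HB Require Import structures.
From mathcomp Require Import all_boot all_order all_algebra.
From mathcomp Require Import complex mxtens.
From mathcomp Require Import ring lra.
Import Order.TTheory GRing.Theory Num.Theory.
Local Open Scope ring_scope.
Set Implicit Arguments. Unset Strict Implicit. Unset Printing Implicit Defensive.

Notation cRe := complex.Re. Notation cIm := complex.Im.
Section S.
Variable R : rcfType.
Local Notation C := R[i].

Lemma cE (x y : C) : cRe x = cRe y -> cIm x = cIm y -> x = y.
Proof. by case: x => a b; case: y => c d; rewrite /= => -> ->. Qed.
Lemma cReD (x y : C) : cRe (x + y) = cRe x + cRe y. Proof. by case: x; case: y. Qed.
Lemma cImD (x y : C) : cIm (x + y) = cIm x + cIm y. Proof. by case: x; case: y. Qed.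
Lemma cReN (x : C) : cRe (- x) = - cRe x. Proof. by case: x. Qed.
Lemma cImN (x : C) : cIm (- x) = - cIm x. Proof. by case: x. Qed.
Lemma cReM (x y : C) : cRe (x * y) = cRe x * cRe y - cIm x * cIm y. Proof. by case: x; case: y. Qed.
Lemma cImM (x y : C) : cIm (x * y) = cRe x * cIm y + cIm x * cRe y. Proof. by case: x; case: y. Qed.
Lemma cRe0 : cRe (0 : C) = 0. Proof. by []. Qed.
Lemma cIm0 : cIm (0 : C) = 0. Proof. by []. Qed.
Lemma cRe1 : cRe (1 : C) = 1. Proof. by []. Qed.
Lemma cIm1 : cIm (1 : C) = 0. Proof. by []. Qed.
Lemma conjE (x : C) : Num.conj x = Complex (cRe x) (- cIm x).
Proof.
case: x => a b /=.
have -> : Complex a b = Complex a 0 + 'i%R * Complex b 0.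
  by apply: cE; rewrite !(cReD,cReN,cReM,cImD,cImN,cImM) /=; ring.
rewrite conjC_rect; last 2 first.
  by apply/complex_realP; exists a.
  by apply/complex_realP; exists b.
by apply: cE; rewrite !(cReD,cReN,cReM,cImD,cImN,cImM) /=; ring.
Qed.
Ltac csimp := rewrite ?(cReD,cReN,cReM,cImD,cImN,cImM,cRe0,cIm0,cRe1,cIm1,conjE) /=.
Ltac ceq := apply: cE; csimp; ring.

Lemma pauli_herm (a : 'I_3) : hadj (pauli a) = pauli a :> 'M[C]_2.
Proof.
apply/matrixP => i j; rewrite !mxE.
case: a => [[|[|[|a]]] Ha] //; case: i => [[|[|i]] Hi] //; case: j => [[|[|j]] Hj] //=; ceq.
Qed.

Definition i0 : 'I_3 := @Ordinal 3 0 isT.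
Definition i1 : 'I_3 := @Ordinal 3 1 isT.
Definition i2 : 'I_3 := @Ordinal 3 2 isT.
Definition j0 : 'I_2 := @Ordinal 2 0 isT.
Definition j1 : 'I_2 := @Ordinal 2 1 isT.

Lemma sum3 (V : zmodType) (F : 'I_3 -> V) : \sum_(i < 3) F i = F i0 + F i1 + F i2.
Proof.
rewrite !big_ord_recr big_ord0 /= add0r; congr (F _ + F _ + F _); exact: val_inj.
Qed.
Lemma sum2 (V : zmodType) (F : 'I_2 -> V) : \sum_(i < 2) F i = F j0 + F j1.
Proof.
rewrite !big_ord_recr big_ord0 /= add0r; congr (F _ + F _); exact: val_inj.
Qed.

Definition mx2 (a b c d : C) : 'M[C]_2 :=
  \matrix_(i < 2, j < 2) if i == 0 :> nat then (if j == 0 :> nat then a else b)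
                         else (if j == 0 :> nat then c else d).

Lemma kdotsE (k : 'rV[R]_3) : kdots k =
  mx2 (rC (k 0 i2)) (Complex (k 0 i0) (- k 0 i1)) (Complex (k 0 i0) (k 0 i1)) (rC (- k 0 i2)).
Proof.
apply/matrixP => i j; rewrite /kdots summxE sum3 !mxE.
case: i => [[|[|i]] Hi] //; case: j => [[|[|j]] Hj] //=; rewrite /rC; ceq.
Qed.

Lemma cReNat n : cRe (n%:R : C) = n%:R.
Proof. elim: n => // n IH; by rewrite -!natr1 cReD IH cRe1. Qed.
Lemma cImNat n : cIm (n%:R : C) = 0.
Proof. elim: n => // n IH; by rewrite -!natr1 cImD IH cIm1 addr0. Qed.
Lemma cReRC (x : R) : cRe (rC x) = x. Proof. by []. Qed.
Lemma cImRC (x : R) : cIm (rC x) = 0. Proof. by []. Qed.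
Lemma rCV (x : R) : (rC x)^-1 = rC x^-1.
Proof.
have [->|nz] := eqVneq x 0.
  by rewrite invr0; apply: cE; rewrite /= ?invr0.
have nzC : rC x != 0.
  by apply/eqP => /(congr1 (@complex.Re R)) /= /eqP; rewrite (negbTE nz).
have h : rC x * rC (x^-1) = 1.
  by apply: cE; rewrite /rC ?cReM ?cImM /= ?mulfV // ?mul0r ?mulr0 ?subr0 ?addr0.
by rewrite -[RHS]mul1r -(mulVf nzC) -mulrA h mulr1.
Qed.
Lemma natC n : (n%:R : C) = rC n%:R.
Proof. by apply: cE; [rewrite cReNat | rewrite cImNat]. Qed.
Lemma invNatC n : ((n%:R : C)^-1) = rC ((n%:R : R)^-1).
Proof. by rewrite natC rCV. Qed.

Lemma mx2_eta (Y : 'M[C]_2) : Y = mx2 (Y j0 j0) (Y j0 j1) (Y j1 j0) (Y j1 j1).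
Proof.
apply/matrixP => i j; rewrite !mxE.
case: i => [[|[|i]] Hi] //; case: j => [[|[|j]] Hj] //=; congr (Y _ _); exact: val_inj.
Qed.

Lemma mx2_mul a b c d e f g h :
  mx2 a b c d *m mx2 e f g h = mx2 (a*e+b*g) (a*f+b*h) (c*e+d*g) (c*f+d*h).
Proof.
apply/matrixP => i j; rewrite !mxE sum2 !mxE.
by case: i => [[|[|i]] Hi] //; case: j => [[|[|j]] Hj].
Qed.
Lemma mx2_add a b c d e f g h :
  mx2 a b c d + mx2 e f g h = mx2 (a+e) (b+f) (c+g) (d+h).
Proof.
apply/matrixP => i j; rewrite !mxE.
by case: i => [[|[|i]] Hi] //; case: j => [[|[|j]] Hj].
Qed.
Lemma mx2_opp a b c d : - mx2 a b c d = mx2 (-a) (-b) (-c) (-d).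
Proof.
apply/matrixP => i j; rewrite !mxE.
by case: i => [[|[|i]] Hi] //; case: j => [[|[|j]] Hj].
Qed.
Lemma mx2_scale x a b c d : x *: mx2 a b c d = mx2 (x*a) (x*b) (x*c) (x*d).
Proof.
apply/matrixP => i j; rewrite !mxE.
by case: i => [[|[|i]] Hi] //; case: j => [[|[|j]] Hj].
Qed.
Lemma mx2_adj a b c d : hadj (mx2 a b c d) = mx2 (Num.conj a) (Num.conj c) (Num.conj b) (Num.conj d).
Proof.
apply/matrixP => i j; rewrite !mxE.
by case: i => [[|[|i]] Hi] //; case: j => [[|[|j]] Hj].
Qed.
Lemma mx2_tr a b c d : \tr (mx2 a b c d) = a + d.
Proof. by rewrite /mxtrace sum2 !mxE. Qed.
Lemma id2E : id2 = mx2 1 0 0 1 :> 'M[C]_2.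
Proof.
apply/matrixP => i j; rewrite !mxE.
by case: i => [[|[|i]] Hi] //; case: j => [[|[|j]] Hj].
Qed.
Lemma pauli0E : pauli i0 = mx2 0 1 1 0 :> 'M[C]_2.
Proof.
apply/matrixP => i j; rewrite !mxE.
by case: i => [[|[|i]] Hi] //; case: j => [[|[|j]] Hj].
Qed.
Lemma pauli1E : pauli i1 = mx2 0 (- Complex 0 1) (Complex 0 1) 0 :> 'M[C]_2.
Proof.
apply/matrixP => i j; rewrite !mxE.
by case: i => [[|[|i]] Hi] //; case: j => [[|[|j]] Hj].
Qed.
Lemma pauli2E : pauli i2 = mx2 1 0 0 (-1) :> 'M[C]_2.
Proof.
apply/matrixP => i j; rewrite !mxE.
by case: i => [[|[|i]] Hi] //; case: j => [[|[|j]] Hj].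
Qed.
Lemma mx2_eq a b c d e f g h : a = e -> b = f -> c = g -> d = h -> mx2 a b c d = mx2 e f g h.
Proof. by move=> -> -> -> ->. Qed.

Lemma cReC (a b : R) : cRe (Complex a b) = a. Proof. by []. Qed.
Lemma cImC (a b : R) : cIm (Complex a b) = b. Proof. by []. Qed.
Ltac csimp2 := rewrite ?(cReD,cReN,cReM,cImD,cImN,cImM,cRe0,cIm0,cRe1,cIm1,conjE,cReRC,cImRC,cReC,cImC).
Ltac ceq2 := apply: cE; csimp2; ring.
Ltac mxs := rewrite ?(invNatC, kdotsE, id2E, pauli0E, pauli1E, pauli2E, mx2_mul, mx2_add, mx2_opp, mx2_scale, mx2_adj, mx2_tr, expr1, expr0).

Lemma ord3P (a : 'I_3) : [\/ a = i0, a = i1 | a = i2].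
Proof.
case: a => [[|[|[|a]]] Ha] //; [constructor 1 | constructor 2 | constructor 3]; exact: val_inj.
Qed.

Implicit Types k l : 'rV[R]_3.
Definition sqn (k : 'rV[R]_3) : R := k 0 i0 ^+ 2 + k 0 i1 ^+ 2 + k 0 i2 ^+ 2.

Lemma unitvecE k : unitvec k <-> sqn k = 1.
Proof. by rewrite /unitvec sum3. Qed.

Lemma kdots_sq k : kdots k *m kdots k = rC (sqn k) *: id2.
Proof. rewrite /sqn; mxs; apply: mx2_eq; ceq2. Qed.

Lemma kdots_herm k : hadj (kdots k) = kdots k.
Proof. mxs; apply: mx2_eq; ceq2. Qed.

Lemma kdots_tr k : \tr (kdots k) = 0.
Proof. mxs; ceq2. Qed.

Definition hv (H : 'M[C]_2) : 'rV[R]_3 :=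
  \row_(i < 3) (if i == i0 then cRe (H j1 j0) else if i == i1 then cIm (H j1 j0) else cRe (H j0 j0)).

Lemma herm_kdots (H : 'M[C]_2) : hadj H = H -> \tr H = 0 -> H = kdots (hv H).
Proof.
move=> Hh Ht.
have e00 := congr1 (fun M : 'M[C]_2 => M j0 j0) Hh.
have e01 := congr1 (fun M : 'M[C]_2 => M j0 j1) Hh.
rewrite /= /hadj !mxE conjE in e00 e01.
have im0 : cIm (H j0 j0) = 0.
  by have := congr1 (@complex.Im R) e00; rewrite cImC => h; lra.
rewrite /mxtrace sum2 in Ht.
rewrite {1}(mx2_eta H) kdotsE !mxE.
rewrite (_ : (i2 == i0) = false) // (_ : (i2 == i1) = false) // (_ : (i1 == i0) = false) // !eqxx.
apply: mx2_eq.
- by apply: cE; rewrite ?cReRC ?cImRC ?im0.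
- rewrite -e01 conjE; apply: cE; rewrite ?cReC ?cImC //.
- apply: cE; rewrite ?cReC ?cImC //.
- have h11 : H j1 j1 = - H j0 j0 by apply/eqP; rewrite -subr_eq0 opprK addrC Ht.
  rewrite h11; apply: cE; rewrite ?cReRC ?cImRC ?cReN ?cImN ?im0 ?oppr0 //.
Qed.
End S.

Ltac csimp2 := rewrite ?(cReD,cReN,cReM,cImD,cImN,cImM,cRe0,cIm0,cRe1,cIm1,conjE,cReRC,cImRC,cReC,cImC).
Ltac ceq2 := apply: cE; csimp2; ring.
Ltac mxs := rewrite ?(invNatC, kdotsE, id2E, pauli0E, pauli1E, pauli2E, mx2_mul, mx2_add, mx2_opp, mx2_scale, mx2_adj, mx2_tr, expr1, expr0).
Ltac ceqf := apply: cE; csimp2; field.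
Ltac msimp0 := rewrite ?(mulr0,mul0r,mulr1,mul1r,addr0,add0r,mulN1r,mulNr,mulrN,opprK,subr0,sub0r).
Ltac bf := mxs; msimp0; apply: mx2_eq; apply: cE; csimp2; ring.
Section S.
Variable R : rcfType.
Local Notation C := R[i].
Implicit Types k l : 'rV[R]_3.
Lemma sumb (V : zmodType) (F : bool -> V) : \sum_(b : bool) F b = F true + F false.
Proof. by rewrite big_bool. Qed.

Definition projQ k (b : bool) : 'M[C]_2 := id2 + ((-1) ^+ b) *: kdots k.

Lemma projE k b : proj k b = (2%:R)^-1 *: projQ k b.
Proof. by []. Qed.

Lemma pinch_gen k (Y : 'M[C]_2) : \sum_(b : bool) proj k b *m Y *m proj k b =
  ((2%:R)^-1 * (2%:R)^-1) *: \sum_(b : bool) projQ k b *m Y *m projQ k b.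
Proof.
rewrite scaler_sumr; apply: eq_bigr => b _.
by rewrite projE -!scalemxAl -scalemxAr scalerA.
Qed.

Lemma pinchQ_id k : \sum_(b : bool) projQ k b *m id2 *m projQ k b = rC (2%:R * (1 + sqn k)) *: id2.
Proof. rewrite sumb /projQ /sqn; bf. Qed.

Lemma pinchQ_p0 k : \sum_(b : bool) projQ k b *m pauli i0 *m projQ k b =
   rC (4%:R * k 0 i0) *: kdots k + rC (2%:R * (1 - sqn k)) *: pauli i0.
Proof.
rewrite sumb /projQ /sqn.
mxs; msimp0; apply: mx2_eq; apply: cE; csimp2; ring.
Qed.

Lemma pinchQ_p1 k : \sum_(b : bool) projQ k b *m pauli i1 *m projQ k b =
   rC (4%:R * k 0 i1) *: kdots k + rC (2%:R * (1 - sqn k)) *: pauli i1.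
Proof.
rewrite sumb /projQ /sqn.
mxs; msimp0; apply: mx2_eq; apply: cE; csimp2; ring.
Qed.

Lemma pinchQ_p2 k : \sum_(b : bool) projQ k b *m pauli i2 *m projQ k b =
   rC (4%:R * k 0 i2) *: kdots k + rC (2%:R * (1 - sqn k)) *: pauli i2.
Proof.
rewrite sumb /projQ /sqn.
mxs; msimp0; apply: mx2_eq; apply: cE; csimp2; ring.
Qed.

Lemma pinchQ_pauli k a : \sum_(b : bool) projQ k b *m pauli a *m projQ k b =
   rC (4%:R * k 0 a) *: kdots k + rC (2%:R * (1 - sqn k)) *: pauli a.
Proof. by case: (ord3P a) => ->; [exact: pinchQ_p0 | exact: pinchQ_p1 | exact: pinchQ_p2]. Qed.

End S.

Section S.
Variable R : rcfType.
Local Notation C := R[i].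
Implicit Types k l : 'rV[R]_3.

Section Tens.
Variables m n p q : nat.
Implicit Types (A : 'M[C]_(m,n)) (B : 'M[C]_(p,q)).

Lemma tensmxDl A1 A2 B : (A1 + A2) *t B = A1 *t B + A2 *t B.
Proof. by apply/matrixP => i j; rewrite !mxE mulrDl. Qed.
Lemma tensmxDr A B1 B2 : A *t (B1 + B2) = A *t B1 + A *t B2.
Proof. by apply/matrixP => i j; rewrite !mxE mulrDr. Qed.
Lemma tensmxZl c A B : (c *: A) *t B = c *: (A *t B).
Proof. by apply/matrixP => i j; rewrite !mxE mulrA. Qed.
Lemma tensmxZr c A B : A *t (c *: B) = c *: (A *t B).
Proof. by apply/matrixP => i j; rewrite !mxE mulrCA. Qed.
Lemma tensmx_suml (I : Type) (r : seq I) (P : pred I) (F : I -> 'M[C]_(m,n)) B :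
  (\sum_(i <- r | P i) F i) *t B = \sum_(i <- r | P i) (F i *t B).
Proof.
apply/matrixP => i j; rewrite !mxE !summxE mulr_suml; apply: eq_bigr => x _.
by rewrite !mxE.
Qed.
Lemma tensmx_sumr (I : Type) (r : seq I) (P : pred I) A (F : I -> 'M[C]_(p,q)) :
  A *t (\sum_(i <- r | P i) F i) = \sum_(i <- r | P i) (A *t F i).
Proof.
apply/matrixP => i j; rewrite !mxE !summxE mulr_sumr; apply: eq_bigr => x _.
by rewrite !mxE.
Qed.
Lemma hadj_tens A B : hadj (A *t B) = hadj A *t hadj B.
Proof. by rewrite /hadj trmx_tens map_mxT. Qed.
End Tens.

Lemma hadj_mul m n p (A : 'M[C]_(m,n)) (B : 'M[C]_(n,p)) : hadj (A *m B) = hadj B *m hadj A.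
Proof. by rewrite /hadj trmx_mul map_mxM. Qed.
Lemma hadjK m n (A : 'M[C]_(m,n)) : hadj (hadj A) = A.
Proof. by apply/matrixP => i j; rewrite !mxE conjCK. Qed.
Lemma tr_hadj n (A : 'M[C]_n) : \tr (hadj A) = Num.conj (\tr A).
Proof. by rewrite /mxtrace rmorph_sum; apply: eq_bigr => i _; rewrite !mxE. Qed.
Lemma mxtrace_tens m n (A : 'M[C]_m) (B : 'M[C]_n) : \tr (A *t B) = \tr A * \tr B.
Proof. by rewrite /mxtrace mulr_sum; apply: eq_bigr => i _; rewrite !mxE. Qed.

Lemma tens1 m n : (1%:M : 'M[C]_m) *t (1%:M : 'M[C]_n) = 1%:M.
Proof.
apply/matrixP => i j.
case: (mxtens_indexP i) => i1 i2; case: (mxtens_indexP j) => j1 j2.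
rewrite tensmxE !mxE (can_eq (@mxtens_indexK m n)) xpair_eqE.
by case: (i1 == j1); case: (i2 == j2); rewrite ?mulr1 ?mulr0.
Qed.

Lemma id_tens : id2 *t id2 = 1%:M :> 'M[C]_(2*2).
Proof. exact: tens1. Qed.

End S.

Ltac csimp2 ::= rewrite ?(cReNat,cImNat,cReD,cReN,cReM,cImD,cImN,cImM,cRe0,cIm0,cRe1,cIm1,conjE,cReRC,cImRC,cReC,cImC).
Ltac ceq2 ::= apply: cE; csimp2; ring.
Ltac mxs ::= rewrite ?(invNatC, kdotsE, id2E, pauli0E, pauli1E, pauli2E, mx2_mul, mx2_add, mx2_opp, mx2_scale, mx2_adj, mx2_tr, expr1, expr0).
Ltac ceqf ::= apply: cE; csimp2; field.
Ltac msimp0 ::= rewrite ?(mulr0,mul0r,mulr1,mul1r,addr0,add0r,mulN1r,mulNr,mulrN,opprK,subr0,sub0r).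
Ltac bf ::= mxs; msimp0; apply: mx2_eq; apply: cE; csimp2; ring.
Section S.
Variable R : rcfType.
Local Notation C := R[i].
Implicit Types k l : 'rV[R]_3.

Definition q0 : 'I_4 := @Ordinal 4 0 isT.
Definition q1 : 'I_4 := @Ordinal 4 1 isT.
Definition q2 : 'I_4 := @Ordinal 4 2 isT.
Definition q3 : 'I_4 := @Ordinal 4 3 isT.
Definition sb (a : 'I_4) : 'M[C]_2 :=
  match nat_of_ord a with 0 => id2 | 1 => pauli i0 | 2 => pauli i1 | _ => pauli i2 end.
Lemma sbq0 : sb q0 = id2. Proof. by []. Qed.
Lemma sbq1 : sb q1 = pauli i0. Proof. by []. Qed.
Lemma sbq2 : sb q2 = pauli i1. Proof. by []. Qed.
Lemma sbq3 : sb q3 = pauli i2. Proof. by []. Qed.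

Lemma sum4 (V : zmodType) (F : 'I_4 -> V) : \sum_(i < 4) F i = F q0 + F q1 + F q2 + F q3.
Proof.
rewrite !big_ord_recr big_ord0 /= add0r; congr (F _ + F _ + F _ + F _); exact: val_inj.
Qed.

Lemma sb_herm a : hadj (sb a) = sb a.
Proof.
rewrite /sb; case: a => [[|[|[|[|a]]]] Ha] //=.
- by rewrite id2E mx2_adj conjC1 conjC0.
all: exact: pauli_herm.
Qed.

Lemma expand2 (Y : 'M[C]_2) : 2%:R *: Y = \sum_(a < 4) \tr (Y *m sb a) *: sb a.
Proof.
rewrite sum4 sbq0 sbq1 sbq2 sbq3 (mx2_eta Y); bf.
Qed.


Local Notation M4 := ('M[C]_(2*2)).
Definition bb (a b : 'I_4) : M4 := sb a *t sb b.
Definition co (X : M4) (a b : 'I_4) : C := \tr (X *m bb a b).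
Definition E (X : M4) : M4 := \sum_(a < 4) \sum_(b < 4) co X a b *: bb a b.

Lemma bb_herm a b : hadj (bb a b) = bb a b.
Proof. by rewrite /bb hadj_tens !sb_herm. Qed.

Lemma coD X Y a b : co (X + Y) a b = co X a b + co Y a b.
Proof. by rewrite /co mulmxDl mxtraceD. Qed.
Lemma coZ c X a b : co (c *: X) a b = c * co X a b.
Proof. by rewrite /co -scalemxAl mxtraceZ. Qed.
Lemma coN X a b : co (- X) a b = - co X a b.
Proof. by rewrite /co mulNmx raddfN. Qed.
Lemma coB X Y a b : co (X - Y) a b = co X a b - co Y a b.
Proof. by rewrite coD coN. Qed.

Lemma E_add X Y : E (X + Y) = E X + E Y.
Proof.
rewrite /E -big_split; apply: eq_bigr => a _; rewrite -big_split; apply: eq_bigr => b _.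
by rewrite coD scalerDl.
Qed.
Lemma E_scale c X : E (c *: X) = c *: E X.
Proof.
rewrite /E scaler_sumr; apply: eq_bigr => a _; rewrite scaler_sumr; apply: eq_bigr => b _.
by rewrite coZ scalerA.
Qed.
Lemma E0 : E 0 = 0.
Proof. by rewrite /E big1 // => a _; rewrite big1 // => b _; rewrite /co mul0mx mxtrace0 scale0r. Qed.

Lemma E_sum (I : Type) (r : seq I) (P : pred I) (F : I -> M4) :
  E (\sum_(i <- r | P i) F i) = \sum_(i <- r | P i) E (F i).
Proof. exact: (big_morph E E_add E0). Qed.

Lemma E_tens (A B : 'M[C]_2) : E (A *t B) = 4%:R *: (A *t B).
Proof.
have -> : (4%:R : C) = 2%:R * 2%:R by rewrite -natrM.
rewrite -scalerA -tensmxZl -tensmxZr !expand2 tensmx_suml /E.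
apply: eq_bigr => a _; rewrite tensmxZl tensmx_sumr scaler_sumr.
apply: eq_bigr => b _; rewrite tensmxZr scalerA /co /bb tensmx_mul mxtrace_tens.
by rewrite [_ * \tr (B *m _)]mulrC.
Qed.

Lemma delta_tens m n (p1 q1 : 'I_m) (p2 q2 : 'I_n) :
  delta_mx (mxtens_index (p1, p2)) (mxtens_index (q1, q2)) = (delta_mx p1 q1 *t delta_mx p2 q2 : 'M[C]_(m*n)).
Proof.
apply/matrixP => i j.
case: (mxtens_indexP i) => i1 i2; case: (mxtens_indexP j) => j1 j2.
rewrite tensmxE !mxE !(can_eq (@mxtens_indexK m n)) !xpair_eqE.
by case: (i1 == p1); case: (i2 == p2); case: (j1 == q1); case: (j2 == q2); rewrite ?mulr1 ?mulr0.
Qed.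

Lemma expand4 (X : M4) : 4%:R *: X = E X.
Proof.
rewrite {1 2}(matrix_sum_delta X) scaler_sumr E_sum; apply: eq_bigr => p _.
rewrite scaler_sumr E_sum; apply: eq_bigr => q _.
case: (mxtens_indexP p) => p1 p2; case: (mxtens_indexP q) => q1 q2.
by rewrite E_scale delta_tens E_tens !scalerA mulrC.
Qed.

Lemma co_hadj (Y : M4) a b : co (hadj Y) a b = Num.conj (co Y a b).
Proof. by rewrite /co -tr_hadj hadj_mul bb_herm mxtrace_mulC. Qed.

Lemma parseval (X Y : M4) :
  4%:R * \tr (X *m hadj Y) = \sum_(a < 4) \sum_(b < 4) co X a b * Num.conj (co Y a b).
Proof.
rewrite -mxtraceZ scalemxAr expand4 /E mulmx_sumr raddf_sum /=; apply: eq_bigr => a _.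
rewrite mulmx_sumr raddf_sum /=; apply: eq_bigr => b _.
by rewrite -scalemxAr mxtraceZ co_hadj mulrC.
Qed.

Lemma co_real (X : M4) a b : hadj X = X -> Num.conj (co X a b) = co X a b.
Proof. by move=> hX; rewrite -co_hadj hX. Qed.
End S.

Ltac csimp2 ::= rewrite ?(cReNat,cImNat,cReD,cReN,cReM,cImD,cImN,cImM,cRe0,cIm0,cRe1,cIm1,conjE,cReRC,cImRC,cReC,cImC).
Ltac ceq2 ::= apply: cE; csimp2; ring.
Ltac mxs ::= rewrite ?(invNatC, kdotsE, id2E, pauli0E, pauli1E, pauli2E, mx2_mul, mx2_add, mx2_opp, mx2_scale, mx2_adj, mx2_tr, expr1, expr0).
Ltac ceqf ::= apply: cE; csimp2; field.
Ltac msimp0 ::= rewrite ?(mulr0,mul0r,mulr1,mul1r,addr0,add0r,mulN1r,mulNr,mulrN,opprK,subr0,sub0r).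
Ltac bf ::= mxs; msimp0; apply: mx2_eq; apply: cE; csimp2; ring.
Arguments co {R}. Arguments E {R}. Arguments bb {R}. Arguments sb {R}.
Section S.
Variable R : rcfType.
Local Notation C := R[i].
Local Notation M4 := ('M[C]_(2*2)).
Implicit Types k l : 'rV[R]_3.

Lemma rCM (x y : R) : rC x * rC y = rC (x * y). Proof. by apply: cE; csimp2; ring. Qed.
Lemma rCD (x y : R) : rC x + rC y = rC (x + y). Proof. by apply: cE; csimp2; ring. Qed.
Lemma rCN (x : R) : - rC x = rC (- x). Proof. by apply: cE; csimp2; ring. Qed.
Lemma rC1 : rC 1 = 1 :> C. Proof. by []. Qed.
Lemma rC0 : rC 0 = 0 :> C. Proof. by []. Qed.
Lemma rC_sum (I : Type) (r : seq I) (P : pred I) (F : I -> R) :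
  rC (\sum_(i <- r | P i) F i) = \sum_(i <- r | P i) rC (F i).
Proof. exact: (big_morph (@rC R) (fun x y => esym (rCD x y)) rC0). Qed.
Lemma rC_inj (x y : R) : rC x = rC y -> x = y. Proof. by case. Qed.
Lemma conj_rC (x : R) : Num.conj (rC x) = rC x.
Proof. by apply: cE; csimp2; rewrite ?oppr0. Qed.
Lemma real_rC (z : C) : Num.conj z = z -> z = rC (cRe z).
Proof.
move=> h; have := congr1 (@complex.Im R) h; rewrite conjE cImC => h2.
by apply: cE; rewrite ?cReRC ?cImRC //; lra.
Qed.

Definition tau (X : M4) (A B : 'M[C]_2) : C := \tr (X *m (A *t B)).

Lemma tauDl X A1 A2 B : tau X (A1 + A2) B = tau X A1 B + tau X A2 B.
Proof. by rewrite /tau tensmxDl mulmxDr mxtraceD. Qed.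
Lemma tauDr X A B1 B2 : tau X A (B1 + B2) = tau X A B1 + tau X A B2.
Proof. by rewrite /tau tensmxDr mulmxDr mxtraceD. Qed.
Lemma tauZl X c A B : tau X (c *: A) B = c * tau X A B.
Proof. by rewrite /tau tensmxZl -scalemxAr mxtraceZ. Qed.
Lemma tauZr X c A B : tau X A (c *: B) = c * tau X A B.
Proof. by rewrite /tau tensmxZr -scalemxAr mxtraceZ. Qed.
Lemma tau_suml X (I : Type) (r : seq I) (P : pred I) (F : I -> 'M[C]_2) B :
  tau X (\sum_(i <- r | P i) F i) B = \sum_(i <- r | P i) tau X (F i) B.
Proof. by rewrite /tau tensmx_suml mulmx_sumr raddf_sum. Qed.
Lemma tau_sumr X (I : Type) (r : seq I) (P : pred I) A (F : I -> 'M[C]_2) :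
  tau X A (\sum_(i <- r | P i) F i) = \sum_(i <- r | P i) tau X A (F i).
Proof. by rewrite /tau tensmx_sumr mulmx_sumr raddf_sum. Qed.

Lemma co_tau X a b : co X a b = tau X (sb a) (sb b). Proof. by []. Qed.

Lemma sb_lift (i : 'I_3) : sb (lift ord0 i) = pauli i :> 'M[C]_2.
Proof. by case: (ord3P i) => ->. Qed.
Lemma sb_ord0 : sb ord0 = id2 :> 'M[C]_2. Proof. by []. Qed.

Lemma tau_real X A B : hadj X = X -> hadj A = A -> hadj B = B -> Num.conj (tau X A B) = tau X A B.
Proof.
move=> hX hA hB; rewrite /tau -tr_hadj hadj_mul hadj_tens hA hB hX mxtrace_mulC //.
Qed.

Lemma hs_formula (Y : M4) (Z : 'I_3 -> 'I_3 -> R) :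
  (forall a, co Y ord0 a = 0) -> (forall a, co Y a ord0 = 0) ->
  (forall i j, co Y (lift ord0 i) (lift ord0 j) = rC (Z i j)) ->
  4%:R * \tr (Y *m hadj Y) = rC (\sum_i \sum_j Z i j ^+ 2).
Proof.
move=> h0l h0r hZ; rewrite parseval big_ord_recl big1 ?add0r; last first.
  by move=> b _; rewrite h0l mul0r.
rewrite rC_sum; apply: eq_bigr => i _.
rewrite big_ord_recl h0r mul0r add0r rC_sum; apply: eq_bigr => j _.
by rewrite hZ conj_rC rCM expr2.
Qed.
End S.

Ltac csimp2 ::= rewrite ?(cReNat,cImNat,cReD,cReN,cReM,cImD,cImN,cImM,cRe0,cIm0,cRe1,cIm1,conjE,cReRC,cImRC,cReC,cImC).
Ltac ceq2 ::= apply: cE; csimp2; ring.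
Ltac mxs ::= rewrite ?(invNatC, kdotsE, id2E, pauli0E, pauli1E, pauli2E, mx2_mul, mx2_add, mx2_opp, mx2_scale, mx2_adj, mx2_tr, expr1, expr0).
Ltac ceqf ::= apply: cE; csimp2; field.
Ltac msimp0 ::= rewrite ?(mulr0,mul0r,mulr1,mul1r,addr0,add0r,mulN1r,mulNr,mulrN,opprK,subr0,sub0r).
Ltac bf ::= mxs; msimp0; apply: mx2_eq; apply: cE; csimp2; ring.
Arguments co {R}. Arguments E {R}. Arguments bb {R}. Arguments sb {R}.
Arguments tau {R}.
Section S.
Variable R : rcfType.
Local Notation C := R[i].
Local Notation M4 := ('M[C]_(2*2)).
Implicit Types k l : 'rV[R]_3.

Definition Phi k (Y : 'M[C]_2) := \sum_(b : bool) proj k b *m Y *m proj k b.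

Lemma phi_id k : sqn k = 1 -> Phi k id2 = id2.
Proof.
move=> hk; rewrite /Phi pinch_gen pinchQ_id hk scalerA !invNatC !rCM.
have -> : (2%:R : R)^-1 * 2%:R^-1 * (2%:R * (1 + 1)) = 1 by field.
by rewrite rC1 scale1r.
Qed.

Lemma phi_pauli k i : sqn k = 1 -> Phi k (pauli i) = rC (k 0 i) *: kdots k.
Proof.
move=> hk; rewrite /Phi pinch_gen pinchQ_pauli hk subrr mulr0 rC0 scale0r addr0.
rewrite scalerA !invNatC !rCM.
have -> : (2%:R : R)^-1 * 2%:R^-1 * (4%:R * k 0 i) = k 0 i by field.
by [].
Qed.

Lemma trPi (rho : M4) (A B Q1 Q2 : 'M[C]_2) :
  \tr ((A *t B) *m rho *m (A *t B) *m (Q1 *t Q2)) = tau rho (A *m Q1 *m A) (B *m Q2 *m B).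
Proof.
rewrite /tau -!tensmx_mul -!mulmxA mxtrace_mulC -!mulmxA.
done.
Qed.

Lemma co_chi (rho : M4) k l a b : co (chi rho k l) a b = tau rho (Phi k (sb a)) (Phi l (sb b)).
Proof.
rewrite /chi /co /Phi mulmx_suml raddf_sum tau_suml; apply: eq_bigr => x _.
rewrite mulmx_suml raddf_sum tau_sumr; apply: eq_bigr => y _.
by rewrite /bb; apply: trPi.
Qed.

Lemma co_to (rho : M4) k a b : co (rho_to rho k) a b = tau rho (Phi k (sb a)) (sb b).
Proof.
rewrite /rho_to /co /Phi mulmx_suml raddf_sum tau_suml; apply: eq_bigr => x _.
by rewrite /bb; apply: etrans (trPi _ _ _ _ _) _; rewrite /id2 mul1mx mulmx1.
Qed.

Lemma co_from (rho : M4) l a b : co (rho_from rho l) a b = tau rho (sb a) (Phi l (sb b)).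
Proof.
rewrite /rho_from /co /Phi mulmx_suml raddf_sum tau_sumr; apply: eq_bigr => x _.
by rewrite /bb; apply: etrans (trPi _ _ _ _ _) _; rewrite /id2 mul1mx mulmx1.
Qed.

Lemma tau_kdotsl X k B : tau X (kdots k) B = \sum_i rC (k 0 i) * tau X (pauli i) B.
Proof. by rewrite /kdots tau_suml; apply: eq_bigr => i _; rewrite tauZl. Qed.
Lemma tau_kdotsr X k A : tau X A (kdots k) = \sum_i rC (k 0 i) * tau X A (pauli i).
Proof. by rewrite /kdots tau_sumr; apply: eq_bigr => i _; rewrite tauZr. Qed.
End S.

Ltac csimp2 ::= rewrite ?(cReNat,cImNat,cReD,cReN,cReM,cImD,cImN,cImM,cRe0,cIm0,cRe1,cIm1,conjE,cReRC,cImRC,cReC,cImC).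
Ltac ceq2 ::= apply: cE; csimp2; ring.
Ltac mxs ::= rewrite ?(invNatC, kdotsE, id2E, pauli0E, pauli1E, pauli2E, mx2_mul, mx2_add, mx2_opp, mx2_scale, mx2_adj, mx2_tr, expr1, expr0).
Ltac ceqf ::= apply: cE; csimp2; field.
Ltac msimp0 ::= rewrite ?(mulr0,mul0r,mulr1,mul1r,addr0,add0r,mulN1r,mulNr,mulrN,opprK,subr0,sub0r).
Ltac bf ::= mxs; msimp0; apply: mx2_eq; apply: cE; csimp2; ring.
Arguments co {R}. Arguments E {R}. Arguments bb {R}. Arguments sb {R}.
Arguments tau {R}.
Arguments Phi {R}.
Section S.
Variable R : rcfType.
Local Notation C := R[i].
Local Notation M4 := ('M[C]_(2*2)).
Implicit Types k l : 'rV[R]_3.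

Variable rho : M4.
Hypothesis hH : hadj rho = rho.
Hypothesis htr : \tr rho = 1.
Hypothesis hA : forall a : 'I_3, \tr (rho *m (pauli a *t id2)) = 0.
Hypothesis hB : forall a : 'I_3, \tr (rho *m (id2 *t pauli a)) = 0.

Definition Tm (i j : 'I_3) : R := cRe (tau rho (pauli i) (pauli j)).

Lemma id2_herm : hadj id2 = id2 :> 'M[C]_2.
Proof. by rewrite id2E mx2_adj conjC1 conjC0. Qed.

Lemma tauT i j : tau rho (pauli i) (pauli j) = rC (Tm i j).
Proof. by apply: real_rC; rewrite tau_real ?pauli_herm. Qed.

Lemma tau11 : tau rho id2 id2 = 1.
Proof. by rewrite /tau id_tens mulmx1. Qed.

Lemma tau_id_k l : tau rho id2 (kdots l) = 0.
Proof. by rewrite tau_kdotsr big1 // => i _; rewrite [tau _ _ _]hB mulr0. Qed.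
Lemma tau_k_id k : tau rho (kdots k) id2 = 0.
Proof. by rewrite tau_kdotsl big1 // => i _; rewrite [tau _ _ _]hA mulr0. Qed.

Definition cc k l : R := \sum_i \sum_j k 0 i * l 0 j * Tm i j.

Lemma tau_kk k l : tau rho (kdots k) (kdots l) = rC (cc k l).
Proof.
rewrite tau_kdotsl /cc rC_sum; apply: eq_bigr => i _.
rewrite tau_kdotsr mulr_sumr rC_sum; apply: eq_bigr => j _.
by rewrite tauT !rCM mulrA.
Qed.


Lemma co_rho_lift i j : co rho (lift ord0 i) (lift ord0 j) = rC (Tm i j).
Proof. by rewrite co_tau !sb_lift tauT. Qed.

Lemma HS2_chi k l : sqn k = 1 -> sqn l = 1 ->
  4%:R * HS2 rho (chi rho k l) = rC (\sum_i \sum_j (Tm i j - k 0 i * l 0 j * cc k l) ^+ 2).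
Proof.
move=> hk hl; rewrite /HS2; apply: hs_formula.
- move=> a; rewrite coB co_chi phi_id // co_tau sb_ord0.
  case: (unliftP ord0 a) => [j ->|->].
    by rewrite sb_lift phi_pauli // tauZr tau_id_k mulr0 [tau rho id2 (pauli j)]hB subr0.
  by rewrite sb_ord0 phi_id // subrr.
- move=> a; rewrite coB co_chi phi_id // co_tau sb_ord0.
  case: (unliftP ord0 a) => [j ->|->].
    by rewrite sb_lift phi_pauli // tauZl tau_k_id mulr0 [tau rho (pauli j) id2]hA subr0.
  by rewrite sb_ord0 phi_id // subrr.
- move=> i j; rewrite coB co_chi co_rho_lift !sb_lift !phi_pauli // tauZl tauZr tau_kk.
  by rewrite !rCM rCN rCD mulrA.
Qed.

Lemma HS2_to k : sqn k = 1 ->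
  4%:R * HS2 rho (rho_to rho k) =
    rC (\sum_i \sum_j (Tm i j - k 0 i * \sum_p (k 0 p * Tm p j)) ^+ 2).
Proof.
move=> hk; rewrite /HS2; apply: hs_formula.
- move=> a; rewrite coB co_to phi_id // co_tau sb_ord0 subrr //.
- move=> a; rewrite coB co_to co_tau sb_ord0.
  case: (unliftP ord0 a) => [j ->|->].
    by rewrite sb_lift phi_pauli // tauZl tau_k_id mulr0 [tau rho (pauli j) id2]hA subr0.
  by rewrite sb_ord0 phi_id // subrr.
- move=> i j; rewrite coB co_to co_rho_lift !sb_lift !phi_pauli // tauZl tau_kdotsl.
  have -> : \sum_p rC (k 0 p) * tau rho (pauli p) (pauli j) = rC (\sum_p k 0 p * Tm p j).
    by rewrite rC_sum; apply: eq_bigr => p _; rewrite tauT rCM.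
  by rewrite rCM rCN rCD.
Qed.

Lemma HS2_from l : sqn l = 1 ->
  4%:R * HS2 rho (rho_from rho l) =
    rC (\sum_i \sum_j (Tm i j - l 0 j * \sum_p (l 0 p * Tm i p)) ^+ 2).
Proof.
move=> hl; rewrite /HS2; apply: hs_formula.
- move=> a; rewrite coB co_from co_tau sb_ord0.
  case: (unliftP ord0 a) => [j ->|->].
    by rewrite sb_lift phi_pauli // tauZr tau_id_k mulr0 [tau rho id2 (pauli j)]hB subr0.
  by rewrite sb_ord0 phi_id // subrr.
- move=> a; rewrite coB co_from phi_id // co_tau sb_ord0 subrr //.
- move=> i j; rewrite coB co_from co_rho_lift !sb_lift !phi_pauli // tauZr tau_kdotsr.
  have -> : \sum_p rC (l 0 p) * tau rho (pauli i) (pauli p) = rC (\sum_p l 0 p * Tm i p).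
    by rewrite rC_sum; apply: eq_bigr => p _; rewrite tauT rCM.
  by rewrite rCM rCN rCD.
Qed.

End S.

Ltac csimp2 ::= rewrite ?(cReNat,cImNat,cReD,cReN,cReM,cImD,cImN,cImM,cRe0,cIm0,cRe1,cIm1,conjE,cReRC,cImRC,cReC,cImC).
Ltac ceq2 ::= apply: cE; csimp2; ring.
Ltac mxs ::= rewrite ?(invNatC, kdotsE, id2E, pauli0E, pauli1E, pauli2E, mx2_mul, mx2_add, mx2_opp, mx2_scale, mx2_adj, mx2_tr, expr1, expr0).
Ltac ceqf ::= apply: cE; csimp2; field.
Ltac msimp0 ::= rewrite ?(mulr0,mul0r,mulr1,mul1r,addr0,add0r,mulN1r,mulNr,mulrN,opprK,subr0,sub0r).
Ltac bf ::= mxs; msimp0; apply: mx2_eq; apply: cE; csimp2; ring.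
Arguments co {R}. Arguments E {R}. Arguments bb {R}. Arguments sb {R}.
Arguments tau {R}.
Arguments Phi {R}.
Arguments Tm {R}. Arguments cc {R}.
Section S.
Variable R : rcfType.
Local Notation C := R[i].
Local Notation M4 := ('M[C]_(2*2)).
Implicit Types k l : 'rV[R]_3.

Lemma unitary_l (U : 'M[C]_2) : unitary2 U -> hadj U *m U = 1%:M.
Proof. by move=> hU; apply: mulmx1C. Qed.

Lemma H_rot (U : 'M[C]_2) k : unitary2 U ->
  exists k', kdots k' = U *m kdots k *m hadj U /\ sqn k' = sqn k.
Proof.
move=> hU; have hU' := unitary_l hU.
set H := U *m kdots k *m hadj U.
have hh : hadj H = H by rewrite /H !hadj_mul hadjK kdots_herm mulmxA.
have ht : \tr H = 0 by rewrite /H mxtrace_mulC mulmxA hU' mul1mx kdots_tr.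
exists (hv H); rewrite -herm_kdots //; split => //.
have e1 := kdots_sq (hv H); rewrite -herm_kdots // in e1.
have e2 : H *m H = rC (sqn k) *: 1%:M.
  rewrite /H -!mulmxA (mulmxA (hadj U)) hU' mul1mx !mulmxA -(mulmxA U) kdots_sq.
  by rewrite -scalemxAr -scalemxAl /id2 mulmx1 hU.
have := congr1 (fun M : 'M[C]_2 => M j0 j0) e1; rewrite e2 /id2 !mxE /= => e3.
by apply: rC_inj; move: e3; rewrite !mulr1.
Qed.

End S.

Ltac csimp2 ::= rewrite ?(cReNat,cImNat,cReD,cReN,cReM,cImD,cImN,cImM,cRe0,cIm0,cRe1,cIm1,conjE,cReRC,cImRC,cReC,cImC).
Ltac ceq2 ::= apply: cE; csimp2; ring.
Ltac mxs ::= rewrite ?(invNatC, kdotsE, id2E, pauli0E, pauli1E, pauli2E, mx2_mul, mx2_add, mx2_opp, mx2_scale, mx2_adj, mx2_tr, expr1, expr0).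
Ltac ceqf ::= apply: cE; csimp2; field.
Ltac msimp0 ::= rewrite ?(mulr0,mul0r,mulr1,mul1r,addr0,add0r,mulN1r,mulNr,mulrN,opprK,subr0,sub0r).
Ltac bf ::= mxs; msimp0; apply: mx2_eq; apply: cE; csimp2; ring.
Arguments co {R}. Arguments E {R}. Arguments bb {R}. Arguments sb {R}.
Arguments tau {R}.
Arguments Phi {R}.
Arguments Tm {R}. Arguments cc {R}.
Section S.
Variable R : rcfType.
Local Notation C := R[i].
Local Notation M4 := ('M[C]_(2*2)).
Implicit Types k l : 'rV[R]_3.

Variable rho : M4.
Variables U V : 'M[C]_2.
Variable t : 'I_3 -> R.
Hypothesis hH : hadj rho = rho.
Hypothesis htr : \tr rho = 1.
Hypothesis hA : forall a : 'I_3, \tr (rho *m (pauli a *t id2)) = 0.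
Hypothesis hB : forall a : 'I_3, \tr (rho *m (id2 *t pauli a)) = 0.
Hypothesis hU : unitary2 U.
Hypothesis hV : unitary2 V.
Let rho' := (U *t V) *m rho *m hadj (U *t V).
Hypothesis hT : forall a b : 'I_3, corr rho' a b = rC (if a == b then t a else 0).

Lemma rot_tau A B : tau rho (hadj U *m A *m U) (hadj V *m B *m V) = tau rho' A B.
Proof.
rewrite /tau /rho' hadj_tens.
have -> : (U *t V) *m rho *m (hadj U *t hadj V) *m (A *t B) =
   (U *t V) *m (rho *m ((hadj U *t hadj V) *m (A *t B))) by rewrite !mulmxA.
by rewrite [RHS]mxtrace_mulC -[(rho *m _) *m _]mulmxA !tensmx_mul.
Qed.

Lemma hU' : hadj U *m U = 1%:M. Proof. exact: (unitary_l hU). Qed.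
Lemma hV' : hadj V *m V = 1%:M. Proof. exact: (unitary_l hV). Qed.

Lemma conjK (W K : 'M[C]_2) : hadj W *m W = 1%:M -> hadj W *m (W *m K *m hadj W) *m W = K.
Proof. by move=> h; rewrite !mulmxA h mul1mx -mulmxA h mulmx1. Qed.

Lemma tau_rot k l : exists k' l', [/\ sqn k' = sqn k, sqn l' = sqn l &
   tau rho (kdots k) (kdots l) = tau rho' (kdots k') (kdots l')].
Proof.
have [k' [ek sk]] := H_rot k hU.
have [l' [el sl]] := H_rot l hV.
exists k', l'; split => //.
by rewrite -rot_tau ek el !conjK // ?hU' ?hV'.
Qed.


Lemma hT' a b : tau rho' (pauli a) (pauli b) = rC (if a == b then t a else 0).
Proof. exact: hT. Qed.

Lemma n01 : (i0 == i1) = false. Proof. by []. Qed.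
Lemma n02 : (i0 == i2) = false. Proof. by []. Qed.
Lemma n10 : (i1 == i0) = false. Proof. by []. Qed.
Lemma n12 : (i1 == i2) = false. Proof. by []. Qed.
Lemma n20 : (i2 == i0) = false. Proof. by []. Qed.
Lemma n21 : (i2 == i1) = false. Proof. by []. Qed.

Lemma dg x y : tau rho' (kdots x) (kdots y) =
  rC (x 0 i0 * y 0 i0 * t i0 + x 0 i1 * y 0 i1 * t i1 + x 0 i2 * y 0 i2 * t i2).
Proof.
rewrite tau_kdotsl sum3 !tau_kdotsr !sum3 !hT' !eqxx n01 n02 n10 n12 n20 n21.
apply: cE; csimp2; ring.
Qed.

Lemma cc_diag k l : exists x y, [/\ sqn x = sqn k, sqn y = sqn l &
  cc rho k l = x 0 i0 * y 0 i0 * t i0 + x 0 i1 * y 0 i1 * t i1 + x 0 i2 * y 0 i2 * t i2].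
Proof.
have [x [y [sx sy e]]] := tau_rot k l.
exists x, y; split => //; apply: rC_inj; rewrite -(tau_kk hH) e dg //.
Qed.

Definition ev (j : 'I_3) : 'rV[R]_3 := \row_i (if i == j then 1 else 0).
Lemma kdots_ev j : kdots (ev j) = pauli j.
Proof.
rewrite /kdots sum3 !mxE.
by case: (ord3P j) => ->; rewrite !eqxx ?n01 ?n02 ?n10 ?n12 ?n20 ?n21 rC0 rC1 !scale0r !scale1r ?add0r ?addr0.
Qed.
Lemma sqn_ev j : sqn (ev j) = 1.
Proof.
rewrite /sqn !mxE.
by case: (ord3P j) => ->; rewrite !eqxx ?n01 ?n02 ?n10 ?n12 ?n20 ?n21 expr1n expr0n /= ?add0r ?addr0.
Qed.

Lemma unitary_adj (W : 'M[C]_2) : hadj W *m W = 1%:M -> unitary2 (hadj W).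
Proof. by move=> h; rewrite /unitary2 hadjK. Qed.

Lemma attain j : exists k l, [/\ sqn k = 1, sqn l = 1 & cc rho k l = t j].
Proof.
have [k [ek sk]] := H_rot (ev j) (unitary_adj hU').
have [l [el sl]] := H_rot (ev j) (unitary_adj hV').
rewrite hadjK kdots_ev in ek; rewrite hadjK kdots_ev in el.
exists k, l; split; rewrite ?sk ?sl ?sqn_ev //.
apply: rC_inj; rewrite -(tau_kk hH) ek el rot_tau hT' eqxx //.
Qed.

Lemma norm_formula (Y : M4) (Z : 'I_3 -> 'I_3 -> R) :
  co Y ord0 ord0 = 1 ->
  (forall j, co Y ord0 (lift ord0 j) = 0) -> (forall i, co Y (lift ord0 i) ord0 = 0) ->
  (forall i j, co Y (lift ord0 i) (lift ord0 j) = rC (Z i j)) ->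
  4%:R * \tr (Y *m hadj Y) = rC (1 + \sum_i \sum_j Z i j ^+ 2).
Proof.
move=> h00 h0j hi0 hZ; rewrite parseval big_ord_recl [\sum_(b < 4) co Y ord0 b * _]big_ord_recl h00 conjC1 mulr1.
rewrite big1 ?addr0; last by move=> j _; rewrite h0j mul0r.
rewrite -rCD rC1 rC_sum; congr (_ + _); apply: eq_bigr => i _.
rewrite big_ord_recl hi0 mul0r add0r rC_sum; apply: eq_bigr => j _.
by rewrite hZ conj_rC rCM expr2.
Qed.

Lemma tr_rho' : \tr (rho' *m hadj rho') = \tr (rho *m hadj rho).
Proof.
have hW : hadj (U *t V) *m (U *t V) = 1%:M by rewrite hadj_tens tensmx_mul hU' hV' tens1.
rewrite /rho' !hadj_mul hadjK !mulmxA -(mulmxA _ (hadj (U *t V)) (U *t V)) hW mulmx1.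
by rewrite mxtrace_mulC !mulmxA hW mul1mx.
Qed.

End S.

Ltac csimp2 ::= rewrite ?(cReNat,cImNat,cReD,cReN,cReM,cImD,cImN,cImM,cRe0,cIm0,cRe1,cIm1,conjE,cReRC,cImRC,cReC,cImC).
Ltac ceq2 ::= apply: cE; csimp2; ring.
Ltac mxs ::= rewrite ?(invNatC, kdotsE, id2E, pauli0E, pauli1E, pauli2E, mx2_mul, mx2_add, mx2_opp, mx2_scale, mx2_adj, mx2_tr, expr1, expr0).
Ltac ceqf ::= apply: cE; csimp2; field.
Ltac msimp0 ::= rewrite ?(mulr0,mul0r,mulr1,mul1r,addr0,add0r,mulN1r,mulNr,mulrN,opprK,subr0,sub0r).
Ltac bf ::= mxs; msimp0; apply: mx2_eq; apply: cE; csimp2; ring.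
Arguments co {R}. Arguments E {R}. Arguments bb {R}. Arguments sb {R}.
Arguments tau {R}.
Arguments Phi {R}.
Arguments Tm {R}. Arguments cc {R}.
Section S.
Variable R : rcfType.
Local Notation C := R[i].
Local Notation M4 := ('M[C]_(2*2)).
Implicit Types k l : 'rV[R]_3.

Variable rho : M4.
Variables U V : 'M[C]_2.
Variable t : 'I_3 -> R.
Hypothesis hH : hadj rho = rho.
Hypothesis htr : \tr rho = 1.
Hypothesis hA : forall a : 'I_3, \tr (rho *m (pauli a *t id2)) = 0.
Hypothesis hB : forall a : 'I_3, \tr (rho *m (id2 *t pauli a)) = 0.
Hypothesis hU : unitary2 U.
Hypothesis hV : unitary2 V.
Let rhoW := (U *t V) *m rho *m hadj (U *t V).
Hypothesis hT : forall a b : 'I_3, corr rhoW a b = rC (if a == b then t a else 0).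

Lemma diag_sum : \sum_i \sum_j (if i == j then t i else 0) ^+ 2 = t i0 ^+ 2 + t i1 ^+ 2 + t i2 ^+ 2.
Proof.
Time rewrite sum3.
Time rewrite !sum3.
Time rewrite !eqxx n01 n02 n10 n12 n20 n21.
Time ring.
Qed.

Lemma normT : \sum_i \sum_j Tm rho i j ^+ 2 = t i0 ^+ 2 + t i1 ^+ 2 + t i2 ^+ 2.
Proof.
Time have e1 : 4%:R * \tr (rho *m hadj rho) = rC (1 + \sum_i \sum_j Tm rho i j ^+ 2).
  apply: norm_formula.
  - by rewrite co_tau sb_ord0; apply: tau11.
  - by move=> j; rewrite co_tau sb_ord0 sb_lift; apply: hB.
  - by move=> i; rewrite co_tau sb_ord0 sb_lift; apply: hA.
  - by move=> i j; apply: co_rho_lift.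
Time have e2 : 4%:R * \tr (rhoW *m hadj rhoW) =
    rC (1 + \sum_i \sum_j (if i == j then t i else 0) ^+ 2).
  apply: norm_formula.
  - by rewrite co_tau sb_ord0 -(rot_tau rho U V) /id2 !mulmx1 (hU' hU) (hV' hV) /tau tens1 mulmx1.
  - move=> j; rewrite co_tau sb_ord0 sb_lift -(rot_tau rho U V) /id2 mulmx1 (hU' hU).
    have [m [em _]] := H_rot (ev R j) (unitary_adj (hV' hV)); rewrite hadjK kdots_ev in em.
    by rewrite -em; apply: tau_id_k.
  - move=> i; rewrite co_tau sb_ord0 sb_lift -(rot_tau rho U V) /id2 mulmx1 (hV' hV).
    have [m [em _]] := H_rot (ev R i) (unitary_adj (hU' hU)); rewrite hadjK kdots_ev in em.
    by rewrite -em; apply: tau_k_id.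
  - by move=> i j; rewrite co_tau !sb_lift (hT' hT).
rewrite (tr_rho' rho hU hV) e1 in e2.
have /addrI -> := rC_inj e2.
Time exact: diag_sum.
Qed.
End S.

Ltac csimp2 ::= rewrite ?(cReNat,cImNat,cReD,cReN,cReM,cImD,cImN,cImM,cRe0,cIm0,cRe1,cIm1,conjE,cReRC,cImRC,cReC,cImC).
Ltac ceq2 ::= apply: cE; csimp2; ring.
Ltac mxs ::= rewrite ?(invNatC, kdotsE, id2E, pauli0E, pauli1E, pauli2E, mx2_mul, mx2_add, mx2_opp, mx2_scale, mx2_adj, mx2_tr, expr1, expr0).
Ltac ceqf ::= apply: cE; csimp2; field.
Ltac msimp0 ::= rewrite ?(mulr0,mul0r,mulr1,mul1r,addr0,add0r,mulN1r,mulNr,mulrN,opprK,subr0,sub0r).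
Ltac bf ::= mxs; msimp0; apply: mx2_eq; apply: cE; csimp2; ring.
Arguments co {R}. Arguments E {R}. Arguments bb {R}. Arguments sb {R}.
Arguments tau {R}.
Arguments Phi {R}.
Arguments Tm {R}. Arguments cc {R}.
Section S.
Variable R : rcfType.
Implicit Types k l : 'rV[R]_3.

Lemma cs3 (x0 x1 x2 y0 y1 y2 : R) :
  (x0 * y0 + x1 * y1 + x2 * y2) ^+ 2 <= (x0 ^+ 2 + x1 ^+ 2 + x2 ^+ 2) * (y0 ^+ 2 + y1 ^+ 2 + y2 ^+ 2).
Proof.
rewrite -subr_ge0.
have -> : (x0 ^+ 2 + x1 ^+ 2 + x2 ^+ 2) * (y0 ^+ 2 + y1 ^+ 2 + y2 ^+ 2) - (x0 * y0 + x1 * y1 + x2 * y2) ^+ 2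
  = (x0 * y1 - x1 * y0) ^+ 2 + (x0 * y2 - x2 * y0) ^+ 2 + (x1 * y2 - x2 * y1) ^+ 2 by ring.
by rewrite !addr_ge0 ?sqr_ge0.
Qed.

Lemma ineqM (x y : 'rV[R]_3) (t : 'I_3 -> R) (M : R) :
  t i0 ^+ 2 <= M -> t i1 ^+ 2 <= M -> t i2 ^+ 2 <= M ->
  (x 0 i0 * y 0 i0 * t i0 + x 0 i1 * y 0 i1 * t i1 + x 0 i2 * y 0 i2 * t i2) ^+ 2 <= M * sqn x * sqn y.
Proof.
move=> h0 h1 h2.
have := cs3 (x 0 i0 * t i0) (x 0 i1 * t i1) (x 0 i2 * t i2) (y 0 i0) (y 0 i1) (y 0 i2).
have -> : x 0 i0 * t i0 * y 0 i0 + x 0 i1 * t i1 * y 0 i1 + x 0 i2 * t i2 * y 0 i2 =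
   x 0 i0 * y 0 i0 * t i0 + x 0 i1 * y 0 i1 * t i1 + x 0 i2 * y 0 i2 * t i2 by ring.
move=> /le_trans; apply.
rewrite /sqn; apply: ler_wpM2r; first by rewrite !addr_ge0 ?sqr_ge0.
rewrite !exprMn !mulrDr.
have hh (a b : R) : b <= M -> a ^+ 2 * b <= M * a ^+ 2.
  by move=> hb; rewrite mulrC ler_wpM2r ?sqr_ge0.
by rewrite !lerD // hh.
Qed.

Lemma sq_le (W M : R) : 0 <= W -> 0 <= M -> W ^+ 2 <= M * W -> W <= M.
Proof. move=> hW hM h; nra. Qed.

Lemma rC_le (a b : R) : (rC a <= rC b) = (a <= b).
Proof. by rewrite lecE /= eqxx. Qed.

Lemma div4 (z : R[i]) (y : R) : 4%:R * z = rC y -> z = rC (4%:R^-1 * y).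
Proof.
move=> h; rewrite -rCM -invNatC -h mulKf //.
by rewrite pnatr_eq0.
Qed.

Definition wv (T : 'I_3 -> 'I_3 -> R) k : 'rV[R]_3 := \row_j \sum_p k 0 p * T p j.
Definition wv' (T : 'I_3 -> 'I_3 -> R) l : 'rV[R]_3 := \row_i \sum_p l 0 p * T i p.

Definition ccT (T : 'I_3 -> 'I_3 -> R) k l : R := \sum_i \sum_j k 0 i * l 0 j * T i j.

Lemma alg_chi (T : 'I_3 -> 'I_3 -> R) k l :
  \sum_i \sum_j (T i j - k 0 i * l 0 j * ccT T k l) ^+ 2 =
  \sum_i \sum_j T i j ^+ 2 - 2%:R * ccT T k l ^+ 2 + ccT T k l ^+ 2 * sqn k * sqn l.
Proof. rewrite /ccT /sqn !sum3; ring. Qed.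

Lemma alg_to (T : 'I_3 -> 'I_3 -> R) k :
  \sum_i \sum_j (T i j - k 0 i * \sum_p (k 0 p * T p j)) ^+ 2 =
  \sum_i \sum_j T i j ^+ 2 - (2%:R - sqn k) * sqn (wv T k).
Proof. rewrite /wv /sqn !mxE !sum3; ring. Qed.

Lemma alg_from (T : 'I_3 -> 'I_3 -> R) l :
  \sum_i \sum_j (T i j - l 0 j * \sum_p (l 0 p * T i p)) ^+ 2 =
  \sum_i \sum_j T i j ^+ 2 - (2%:R - sqn l) * sqn (wv' T l).
Proof. rewrite /wv' /sqn !mxE !sum3; ring. Qed.

Lemma cc_wv (T : 'I_3 -> 'I_3 -> R) k : ccT T k (wv T k) = sqn (wv T k).
Proof. unfold ccT, wv, sqn; rewrite !sum3 !mxE !sum3; ring. Qed.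
Lemma cc_wv' (T : 'I_3 -> 'I_3 -> R) l : ccT T (wv' T l) l = sqn (wv' T l).
Proof. unfold ccT, wv', sqn; rewrite !sum3 !mxE !sum3; ring. Qed.

Lemma cc_le_wv (T : 'I_3 -> 'I_3 -> R) k l : ccT T k l ^+ 2 <= sqn l * sqn (wv T k).
Proof.
have -> : ccT T k l = l 0 i0 * wv T k 0 i0 + l 0 i1 * wv T k 0 i1 + l 0 i2 * wv T k 0 i2.
  by rewrite /ccT /wv !mxE !sum3; ring.
exact: cs3.
Qed.
Lemma cc_le_wv' (T : 'I_3 -> 'I_3 -> R) k l : ccT T k l ^+ 2 <= sqn k * sqn (wv' T l).
Proof.
have -> : ccT T k l = k 0 i0 * wv' T l 0 i0 + k 0 i1 * wv' T l 0 i1 + k 0 i2 * wv' T l 0 i2.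
  by rewrite /ccT /wv' !mxE !sum3; ring.
exact: cs3.
Qed.
End S.

Ltac csimp2 ::= rewrite ?(cReNat,cImNat,cReD,cReN,cReM,cImD,cImN,cImM,cRe0,cIm0,cRe1,cIm1,conjE,cReRC,cImRC,cReC,cImC).
Ltac ceq2 ::= apply: cE; csimp2; ring.
Ltac mxs ::= rewrite ?(invNatC, kdotsE, id2E, pauli0E, pauli1E, pauli2E, mx2_mul, mx2_add, mx2_opp, mx2_scale, mx2_adj, mx2_tr, expr1, expr0).
Ltac ceqf ::= apply: cE; csimp2; field.
Ltac msimp0 ::= rewrite ?(mulr0,mul0r,mulr1,mul1r,addr0,add0r,mulN1r,mulNr,mulrN,opprK,subr0,sub0r).
Ltac bf ::= mxs; msimp0; apply: mx2_eq; apply: cE; csimp2; ring.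
Arguments co {R}. Arguments E {R}. Arguments bb {R}. Arguments sb {R}.
Arguments tau {R}.
Arguments Phi {R}.
Arguments Tm {R}. Arguments cc {R}.

Lemma sqn_ge0 (R : rcfType) (k : 'rV[R]_3) : 0 <= sqn k.
Proof. by rewrite /sqn !addr_ge0 ?sqr_ge0. Qed.

Theorem mainTheorem2 (R : rcfType) (rho : 'M[R[i]]_(2 * 2))
  (U V : 'M[R[i]]_2) (t : 'I_3 -> R) :
  density rho ->
  (forall a : 'I_3, \tr (rho *m (pauli a *t id2)) = 0) ->
  (forall a : 'I_3, \tr (rho *m (id2 *t pauli a)) = 0) ->
  unitary2 U -> unitary2 V ->
  (forall a b : 'I_3,
     corr ((U *t V) *m rho *m hadj (U *t V)) a b
       = rC (if a == b then t a else 0)) ->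
  let v := rC ((4%:R)^-1 *
                 (t 0 ^+ 2 + t 1 ^+ 2 + t 2 ^+ 2
                  - Num.max (Num.max (t 0 ^+ 2) (t 1 ^+ 2)) (t 2 ^+ 2))) in
  G_is rho v /\ Gto_is rho v /\ Gfrom_is rho v.
Proof.
move=> hd hA hB hU hV hT; cbv zeta.
case: hd => hH _ htr.
have e0 : (0 : 'I_3) = i0 by apply: val_inj.
have e1 : (1 : 'I_3) = i1 by apply: val_inj.
have e2 : (2 : 'I_3) = i2 by apply: val_inj.
rewrite e2 e0 e1.
set M := Num.max (Num.max (t i0 ^+ 2) (t i1 ^+ 2)) (t i2 ^+ 2).
have hM0 : t i0 ^+ 2 <= M by rewrite /M !le_max lexx.
have hM1 : t i1 ^+ 2 <= M by rewrite /M !le_max lexx orbT.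
have hM2 : t i2 ^+ 2 <= M by rewrite /M le_max lexx orbT.
have hMpos : 0 <= M by apply: le_trans hM0; apply: sqr_ge0.
have [j hj] : exists j, t j ^+ 2 = M.
  by rewrite /M !maxEle; (repeat case: ifP => _); eexists.
have N := normT hH htr hA hB hU hV hT.
have hcc : forall k l, ccT (Tm rho) k l ^+ 2 <= M * sqn k * sqn l.
  move=> k l; have [x [y [sx sy hc]]] := cc_diag hH hU hV hT k l.
  rewrite (_ : ccT (Tm rho) k l = cc rho k l) // hc -sx -sy; exact: ineqM.
have [k0 [l0 [sk0 sl0 hc0]]] : exists k l, [/\ sqn k = 1, sqn l = 1 & ccT (Tm rho) k l ^+ 2 = M].
  have [k [l [sk sl hc]]] := attain hH hU hV hT j.
  by exists k, l; split => //; rewrite -hj -hc.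
have bnd_to : forall k, sqn k = 1 -> sqn (wv (Tm rho) k) <= M.
  move=> k hk; have := hcc k (wv (Tm rho) k); rewrite cc_wv hk mulr1 => h.
  exact: sq_le (sqn_ge0 _) hMpos h.
have bnd_from : forall l, sqn l = 1 -> sqn (wv' (Tm rho) l) <= M.
  move=> l hl; have := hcc (wv' (Tm rho) l) l; rewrite cc_wv' hl mulr1 [M * _]mulrC => h.
  by apply: sq_le (sqn_ge0 _) hMpos _; rewrite mulrC.
split; [split|split; split].
- exists (k0, l0) => /=; first by split; apply/unitvecE.
  rewrite (div4 (HS2_chi hH hA hB sk0 sl0)).
  rewrite (_ : cc rho k0 l0 = ccT (Tm rho) k0 l0) // alg_chi sk0 sl0 hc0 N.
  congr rC; ring.
- move=> [k l] [/unitvecE hk /unitvecE hl] /=.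
  rewrite (div4 (HS2_chi hH hA hB hk hl)).
  rewrite (_ : cc rho k l = ccT (Tm rho) k l) // alg_chi hk hl N rC_le.
  have := hcc k l; rewrite hk hl => h.
  rewrite ler_pM2l ?invr_gt0 ?ltr0n //; lra.
- exists k0; first by apply/unitvecE.
  rewrite (div4 (HS2_to hH hA sk0)) alg_to sk0 N.
  have h1 := cc_le_wv (Tm rho) k0 l0; rewrite hc0 sl0 mul1r in h1.
  have h2 := bnd_to k0 sk0.
  have -> : sqn (wv (Tm rho) k0) = M by apply/eqP; rewrite eq_le h1 h2.
  congr rC; ring.
- move=> k /unitvecE hk.
  rewrite (div4 (HS2_to hH hA hk)) alg_to hk N rC_le.
  have := bnd_to k hk => h.
  rewrite ler_pM2l ?invr_gt0 ?ltr0n //; lra.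
- exists l0; first by apply/unitvecE.
  rewrite (div4 (HS2_from hH hB sl0)) alg_from sl0 N.
  have h1 := cc_le_wv' (Tm rho) k0 l0; rewrite hc0 sk0 mul1r in h1.
  have h2 := bnd_from l0 sl0.
  have -> : sqn (wv' (Tm rho) l0) = M by apply/eqP; rewrite eq_le h1 h2.
  congr rC; ring.
- move=> l /unitvecE hl.
  rewrite (div4 (HS2_from hH hB hl)) alg_from hl N rC_le.
  have := bnd_from l hl => h.
  rewrite ler_pM2l ?invr_gt0 ?ltr0n //; lra.
Qed.
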